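(* Let $G$ be a finite metric graph and let $\lambda > 0$. Let $G_\lambda$ be the subgraph of $G$ consisting of all edges $e$ whose length $L(e)$ is a natural multiple of $\pi/\sqrt{\lambda}$ (together with their incident vertices). Then $$\dim R(G,\lambda) = \beta_1(G_\lambda) - \beta_0^{\rm odd}(G_\lambda).$$ In particular, $\lambda$ is a resonance of $G$ if and only if $\beta_1(G_\lambda) - \beta_0^{\rm odd}(G_\lambda) \neq 0$.
   Context: A finite metric graph $G$ has finite vertex set $V$ and finite edge set $E$ (loops and multiple edges allowed) with a length function $L:E\to(0,\infty)$; each edge $e$ is identified with the interval $[0,L(e)]$, its endpoints $0$ and $L(e)$ being identified with the vertices $o(e)$ and $t(e)$ to which $e$ is incident. For $f\in L^2(G)$, $f_e$ denotes the restriction to $e$, viewed as a function on $[0,L(e)]$. $H^1(G)$ is the set of $f$ with $f_e\in H^1(0,L(e))$ for all $e$ which are continuous at every vertex (the limits of $f_e$ at a vertex $v$ coincide for all edges $e$ incident to $v$; this common value is $f(v)$); $\widetilde H^2(G)$ is the set of $f$ with $f_e \in H^2(0,L(e))$ for all $e$. For such $f$, $\partial_\nu f(v)=\sum_{t(e)=v} f_e'(L(e)) - \sum_{o(e)=v} f_e'(0)$. The Kirchhoff Laplacian $-\Delta_G$ in $L^2(G)$ acts as $(-\Delta_G f)_e=-f_e''$ on the domain $\{f\in H^1(G)\cap\widetilde H^2(G): \partial_\nu f(v)=0 \text{ for all } v\in V\}$; it is self-adjoint with discrete nonnegative spectrum. For $\lambda>0$, the resonance eigenspace is $R(G,\lambda)=\{f\in\ker(-\Delta_G-\lambda):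 f(v)=0 \text{ for all } v\in V\}$, and $\lambda$ is called a (real) resonance of $G$ if $R(G,\lambda)\neq\{0\}$. For a finite graph $H$, $\beta_0(H)$ is its number of connected components and $\beta_1(H)=|E(H)|-|V(H)|+\beta_0(H)$ is its first Betti number. A cycle is said to have odd length with respect to $x>0$ if its total length is an odd multiple of $x$. $\beta_0^{\rm odd}(G_\lambda)$ denotes the number of connected components of $G_\lambda$ which contain a cycle with odd length with respect to $\pi/\sqrt{\lambda}$. *)

(* Defs.v *)
From Stdlib Require Import Reals ClassicalEpsilon.
From mathcomp Require Import all_boot.

Set Implicit Arguments.
Unset Strict Implicit.
Unset Printing Implicit Defensive.

Definition pbool (P : Prop) : bool :=
  if excluded_middle_informative P then true else false.

(* A finite metric graph: vertices 'I_nV, edges 'I_nE (loops and multiple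
   edges allowed), origin/terminus maps, positive lengths. Edge e is
   identified with [0, len e], 0 ~ src e, len e ~ tgt e. *)
Record mgraph := MGraph {
  nV : nat;
  nE : nat;
  src : 'I_nE -> 'I_nV;
  tgt : 'I_nE -> 'I_nV;
  len : 'I_nE -> R;
  len_pos : forall e, Rlt 0 (len e)
}.
Arguments src : clear implicits.
Arguments tgt : clear implicits.
Arguments len : clear implicits.

Unset Implicit Arguments.
Section MG.
Variable G : mgraph.
Local Open Scope R_scope.

Definition edge_int (e : 'I_(nE G)) (x : R) : Prop := 0 < x < len G e.

Definition gfun := 'I_(nE G) -> R -> R.

(* R(G, lam): f in ker(-Delta_G - lam) vanishing at all vertices.
   On each edge f_e solves -f_e'' = lam f_e on (0,L(e)) (with derivative g_e);
   the boundary values of f_e (trace, = f(v)) are 0 at both endpoints, and the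
   boundary values d0 e = f_e'(0), dL e = f_e'(L(e)) exist and satisfy the
   Kirchhoff condition partial_nu f (v) = 0 at every vertex v. *)
Definition Rspace (lam : R) (f : gfun) : Prop :=
  exists (g : gfun) (d0 dL : 'I_(nE G) -> R),
    (forall e x, edge_int e x ->
        derivable_pt_lim (f e) x (g e x) /\
        derivable_pt_lim (g e) x (- lam * f e x)) /\
    (forall e, limit1_in (f e) (edge_int e) 0 0 /\
               limit1_in (f e) (edge_int e) 0 (len G e) /\
               limit1_in (g e) (edge_int e) (d0 e) 0 /\
               limit1_in (g e) (edge_int e) (dL e) (len G e)) /\
    (forall v : 'I_(nV G),
        \big[Rplus/0]_(e | tgt G e == v) dL e
        - \big[Rplus/0]_(e | src G e == v) d0 e = 0).

(* S (a linear space of functions on G, elements identified when equal a.e.,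
   i.e. on the open edges) has dimension d: it has a basis of d elements. *)
Definition has_dim (S : gfun -> Prop) (d : nat) : Prop :=
  exists b : 'I_d -> gfun,
    (forall i, S (b i)) /\
    (forall c : 'I_d -> R,
        (forall e x, edge_int e x -> \big[Rplus/0]_i (c i * b i e x) = 0) ->
        forall i, c i = 0) /\
    (forall f, S f -> exists c : 'I_d -> R,
        forall e x, edge_int e x -> f e x = \big[Rplus/0]_i (c i * b i e x)).

Definition is_resonance (lam : R) : Prop :=
  exists f, Rspace lam f /\ exists e x, edge_int e x /\ f e x <> 0.

Definition unit_len (lam : R) : R := PI / sqrt lam.

Definition inGl (lam : R) (e : 'I_(nE G)) : bool :=
  pbool (exists k : nat, len G e = INR k * unit_len lam).

Definition Vl (lam : R) : {set 'I_(nV G)} :=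
  [set v | [exists e, inGl lam e && ((src G e == v) || (tgt G e == v))]].

Definition El (lam : R) : {set 'I_(nE G)} := [set e | inGl lam e].

Definition adjl (lam : R) : rel 'I_(nV G) :=
  fun u v => [exists e, inGl lam e &&
     (((src G e == u) && (tgt G e == v)) || ((src G e == v) && (tgt G e == u)))].

Definition comps (lam : R) : {set {set 'I_(nV G)}} :=
  [set [set w | connect (adjl lam) v w] | v in Vl lam].

Definition beta0 (lam : R) : nat := #|comps lam|.

(* beta1 = |E| - |V| + beta0 (computed as (|E| + beta0) - |V|, which is
   nonnegative, so the truncated subtraction is exact) *)
Definition beta1 (lam : R) : nat := (#|El lam| + beta0 lam - #|Vl lam|)%N.

(* Cycles: a dart is an oriented edge (e, true) from src to tgt, (e,false)
   from tgt to src. *)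
Definition dstart (d : 'I_(nE G) * bool) : 'I_(nV G) :=
  if d.2 then src G d.1 else tgt G d.1.
Definition dend (d : 'I_(nE G) * bool) : 'I_(nV G) :=
  if d.2 then tgt G d.1 else src G d.1.

Definition is_cycle (lam : R) (p : seq ('I_(nE G) * bool)) : Prop :=
  p <> [::] /\
  all (fun d => inGl lam d.1) p /\
  uniq (map fst p) /\
  uniq (map dstart p) /\
  cycle (fun d1 d2 => dend d1 == dstart d2) p.

Definition cycle_len (p : seq ('I_(nE G) * bool)) : R :=
  \big[Rplus/0]_(d <- p) len G d.1.

Definition odd_wrt (x l : R) : Prop := exists k : nat, l = INR (2 * k + 1) * x.

Definition has_odd_cycle (lam : R) (C : {set 'I_(nV G)}) : Prop :=
  exists p, is_cycle lam p /\ odd_wrt (unit_len lam) (cycle_len p) /\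
            (forall d, d \in p -> dstart d \in C).

Definition beta0odd (lam : R) : nat :=
  #|[set C in comps lam | pbool (has_odd_cycle lam C)]|.

End MG.

(* Main.v *)
Require Import Defs.
From Stdlib Require Import Reals.
From Stdlib Require Import Lra Psatz ZArith Lia ClassicalEpsilon Classical.
From mathcomp Require Import all_boot.
From mathcomp Require Import all_algebra zify.
From mathcomp Require Import Rstruct.

Section AnalysisPart.
Local Open Scope R_scope.

Lemma dsin_lin w x : derivable_pt_lim (fun y => sin (w*y)) x (w * cos (w*x)).
Proof.
have H1 : derivable_pt_lim (fun y => w*y) x w.
{ have := derivable_pt_lim_scal id w x 1 (derivable_pt_lim_id x).
  by rewrite Rmult_1_r. }
have := derivable_pt_lim_comp (fun y => w*y) sin x w (cos (w*x)) H1 (derivable_pt_lim_sin _).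
by rewrite Rmult_comm.
Qed.

Lemma dcos_lin w x : derivable_pt_lim (fun y => cos (w*y)) x (- w * sin (w*x)).
Proof.
have H1 : derivable_pt_lim (fun y => w*y) x w.
{ have := derivable_pt_lim_scal id w x 1 (derivable_pt_lim_id x).
  by rewrite Rmult_1_r. }
have := derivable_pt_lim_comp (fun y => w*y) cos x w (- sin (w*x)) H1 (derivable_pt_lim_cos _).
move=> H; replace (- w * sin (w*x)) with (- sin (w * x) * w) by ring; exact H.
Qed.

Lemma dlim_val f x l l' : derivable_pt_lim f x l -> l = l' -> derivable_pt_lim f x l'.
Proof. by move=> H <-. Qed.

Lemma const_open (F : R -> R) L :
  (forall x, 0 < x < L -> derivable_pt_lim F x 0) ->
  forall a b, 0 < a < L -> 0 < b < L -> F a = F b.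
Proof.
move=> HF.
have key : forall a b, 0 < a < L -> 0 < b < L -> a < b -> F a = F b.
{ move=> a b Ha Hb Hab.
  have [c [Hc _]] := MVT_cor2 F (fun _ => 0) a b Hab (fun c Hc => HF c ltac:(lra)).
  lra. }
move=> a b Ha Hb.
destruct (Rtotal_order a b) as [H|[H|H]].
- by apply key.
- by rewrite H.
- symmetry; by apply key.
Qed.

Lemma edge_sol (w L : R) (f g : R -> R) : 0 < w ->
  (forall x, 0 < x < L -> derivable_pt_lim f x (g x) /\
                          derivable_pt_lim g x (- (w*w) * f x)) ->
  exists a b, forall x, 0 < x < L ->
    f x = a * sin (w*x) + b * cos (w*x) /\
    g x = a * w * cos (w*x) - b * w * sin (w*x).
Proof.
move=> Hw H.
pose P := fun x => f x * cos (w*x) - / w * g x * sin (w*x).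
pose Q := fun x => f x * sin (w*x) + / w * g x * cos (w*x).
have HP : forall x, 0 < x < L -> derivable_pt_lim P x 0.
{ move=> x Hx; have [Hf Hg] := H x Hx.
  have := derivable_pt_lim_minus _ _ x _ _
     (derivable_pt_lim_mult f (fun y => cos (w*y)) x _ _ Hf (dcos_lin w x))
     (derivable_pt_lim_mult (mult_real_fct (/w) g) (fun y => sin (w*y)) x _ _
          (derivable_pt_lim_scal g (/w) x _ Hg) (dsin_lin w x)).
  move=> D; apply: (dlim_val _ _ _ _ D).
  rewrite /mult_real_fct; field; lra. }
have HQ : forall x, 0 < x < L -> derivable_pt_lim Q x 0.
{ move=> x Hx; have [Hf Hg] := H x Hx.
  have := derivable_pt_lim_plus _ _ x _ _
     (derivable_pt_lim_mult f (fun y => sin (w*y)) x _ _ Hf (dsin_lin w x))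
     (derivable_pt_lim_mult (mult_real_fct (/w) g) (fun y => cos (w*y)) x _ _
          (derivable_pt_lim_scal g (/w) x _ Hg) (dcos_lin w x)).
  move=> D; apply: (dlim_val _ _ _ _ D).
  rewrite /mult_real_fct; field; lra. }
destruct (Rlt_or_le 0 L) as [HL|HL]; last first.
{ exists 0, 0 => x Hx; lra. }
have HL2 : 0 < L/2 < L by lra.
exists (Q (L/2)), (P (L/2)) => x Hx.
rewrite -(const_open P L HP x _ Hx HL2) -(const_open Q L HQ x _ Hx HL2).
rewrite /P /Q.
have S := sin2_cos2 (w*x).
rewrite /Rsqr in S.
split.
- transitivity (f x * (sin (w * x) * sin (w * x) + cos (w * x) * cos (w * x))).
  + rewrite S; ring.
  + ring.
- transitivity (g x * (sin (w * x) * sin (w * x) + cos (w * x) * cos (w * x))).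
  + rewrite S; ring.
  + field; lra.
Qed.

Lemma lim_ext (f h : R -> R) (D : R -> Prop) l x0 :
  (forall x, D x -> f x = h x) -> limit1_in f D l x0 -> limit1_in h D l x0.
Proof.
move=> E Hf eps He; have [alp [Ha Hx]] := Hf eps He.
exists alp; split => // x [Dx Hd]; rewrite -E //; exact: Hx.
Qed.

Lemma cont_lim (h : R -> R) (D : R -> Prop) x0 :
  continuity_pt h x0 -> limit1_in h D (h x0) x0.
Proof.
move=> Hc eps He; have [alp [Ha Hx]] := Hc eps He.
exists alp; split => // x [Dx Hd].
destruct (Req_dec x x0) as [->|Hne].
- simpl; rewrite /R_dist Rminus_diag Rabs_R0; lra.
- apply: Hx; split => //; split => //; auto.
Qed.

Lemma adh0 L : 0 < L -> adhDa (fun x => 0 < x < L) 0.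
Proof.
move=> HL alp Ha; exists (Rmin alp L / 2).
have := Rmin_l alp L; have := Rmin_r alp L; have := Rmin_glb_lt alp L 0 Ha HL.
move=> H1 H2 H3; split; first lra.
rewrite /R_dist Rminus_0_r Rabs_pos_eq; lra.
Qed.

Lemma adhL L : 0 < L -> adhDa (fun x => 0 < x < L) L.
Proof.
move=> HL alp Ha; exists (L - Rmin alp L / 2).
have := Rmin_l alp L; have := Rmin_r alp L; have := Rmin_glb_lt alp L 0 Ha HL.
move=> H1 H2 H3; split; first lra.
rewrite /R_dist Rabs_left1; lra.
Qed.

Lemma cont_trig a b w x : continuity_pt (fun y => a * sin (w*y) + b * cos (w*y)) x.
Proof.
apply: derivable_continuous_pt.
exists (a * (w * cos (w*x)) + b * (- w * sin (w*x))).
exact: (derivable_pt_lim_plus _ _ x _ _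
  (derivable_pt_lim_scal _ a x _ (dsin_lin w x))
  (derivable_pt_lim_scal _ b x _ (dcos_lin w x))).
Qed.

Lemma cont_trig' a b w x : continuity_pt (fun y => a * w * cos (w*y) - b * w * sin (w*y)) x.
Proof.
apply: derivable_continuous_pt.
exists (a * w * (- w * sin (w*x)) - b * w * (w * cos (w*x))).
exact: (derivable_pt_lim_minus _ _ x _ _
  (derivable_pt_lim_scal _ (a*w) x _ (dcos_lin w x))
  (derivable_pt_lim_scal _ (b*w) x _ (dsin_lin w x))).
Qed.

Lemma edge_full (w L : R) (f g : R -> R) (d0 dL : R) : 0 < w -> 0 < L ->
  (forall x, 0 < x < L -> derivable_pt_lim f x (g x) /\
                          derivable_pt_lim g x (- (w*w) * f x)) ->
  limit1_in f (fun x => 0 < x < L) 0 0 ->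
  limit1_in f (fun x => 0 < x < L) 0 L ->
  limit1_in g (fun x => 0 < x < L) d0 0 ->
  limit1_in g (fun x => 0 < x < L) dL L ->
  (forall x, 0 < x < L -> f x = d0 / w * sin (w*x)) /\
  d0 / w * sin (w*L) = 0 /\ dL = d0 * cos (w*L).
Proof.
move=> Hw HL H l1 l2 l3 l4.
have [a [b Hab]] := edge_sol w L f g Hw H.
have e1 := single_limit _ _ _ _ _ (adh0 L HL)
  (lim_ext _ _ _ _ _ (fun x Hx => proj1 (Hab x Hx)) l1)
  (cont_lim _ _ _ (cont_trig a b w 0)).
have e2 := single_limit _ _ _ _ _ (adh0 L HL)
  (lim_ext _ _ _ _ _ (fun x Hx => proj2 (Hab x Hx)) l3)
  (cont_lim _ _ _ (cont_trig' a b w 0)).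
have e3 := single_limit _ _ _ _ _ (adhL L HL)
  (lim_ext _ _ _ _ _ (fun x Hx => proj1 (Hab x Hx)) l2)
  (cont_lim _ _ _ (cont_trig a b w L)).
have e4 := single_limit _ _ _ _ _ (adhL L HL)
  (lim_ext _ _ _ _ _ (fun x Hx => proj2 (Hab x Hx)) l4)
  (cont_lim _ _ _ (cont_trig' a b w L)).
rewrite Rmult_0_r sin_0 cos_0 in e1 e2.
have hb : b = 0 by lra.
have ha : a = d0 / w by rewrite e2; field; lra.
subst b; split; [|split].
- move=> x Hx; rewrite (proj1 (Hab x Hx)) ha; ring.
- rewrite -ha e3; ring.
- rewrite e4 ha; field; lra.
Qed.

Lemma edge_conv (w a : R) x :
  derivable_pt_lim (fun y => a * sin (w*y)) x (a * w * cos (w*x)) /\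
  derivable_pt_lim (fun y => a * w * cos (w*y)) x (- (w*w) * (a * sin (w*x))).
Proof.
split.
- apply: (dlim_val _ _ _ _ (derivable_pt_lim_scal _ a x _ (dsin_lin w x))); ring.
- apply: (dlim_val _ _ _ _ (derivable_pt_lim_scal _ (a*w) x _ (dcos_lin w x))); ring.
Qed.

Lemma cont_sin1 a w x : continuity_pt (fun y => a * sin (w*y)) x.
Proof.
apply: derivable_continuous_pt; exists (a * w * cos (w*x)); exact: (proj1 (edge_conv w a x)).
Qed.

Lemma cont_cos1 a w x : continuity_pt (fun y => a * w * cos (w*y)) x.
Proof.
apply: derivable_continuous_pt; exists (- (w*w) * (a * sin (w*x))); exact: (proj2 (edge_conv w a x)).
Qed.

Lemma sin_kPI k : sin (INR k * PI) = 0.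
Proof.
elim: k => [|k IH]; first by rewrite Rmult_0_l sin_0.
rewrite S_INR Rmult_plus_distr_r Rmult_1_l neg_sin IH; ring.
Qed.

Lemma cos_kPI k : cos (INR k * PI) = if Nat.odd k then -1 else 1.
Proof.
elim: k => [|k IH]; first by rewrite Rmult_0_l cos_0.
rewrite S_INR Rmult_plus_distr_r Rmult_1_l neg_cos IH Nat.odd_succ -Nat.negb_odd.
by case: (Nat.odd k); simpl; ring.
Qed.

Lemma sin0_pos x : 0 < x -> sin x = 0 -> exists k : nat, x = INR k * PI.
Proof.
move=> Hx Hs; have [k Hk] := sin_eq_0_0 x Hs.
destruct (Z.le_gt_cases 0 k) as [Hk0|Hk0].
- exists (Z.to_nat k); rewrite INR_IZR_INZ Z2Nat.id //.
- have : IZR k <= -1 by apply: IZR_le; lia.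
  have := PI_RGT_0; nra.
Qed.

End AnalysisPart.

Set Implicit Arguments.
Unset Strict Implicit.
Unset Printing Implicit Defensive.


Section Graph.
Variable G : mgraph.
Variable lam : R.

Local Notation dart := (prod (ordinal (nE G)) bool).
Definition dS := dstart G.
Definition dE := dend G.
Definition inEl (d : dart) : bool := inGl G lam d.1.

Fixpoint wok (v : 'I_(nV G)) (w : seq dart) : bool :=
  if w is d :: w' then (dstart G d == v) && wok (dend G d) w' else true.
Fixpoint wend (v : 'I_(nV G)) (w : seq dart) : 'I_(nV G) :=
  if w is d :: w' then wend (dend G d) w' else v.

Definition kof (e : 'I_(nE G)) : nat :=
  match excluded_middle_informative (exists k : nat, len G e = Rmult (INR k) (unit_len lam)) with
  | left H => proj1_sig (constructive_indefinite_description _ H)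
  | right _ => 0%N end.

Lemma kofP e : inGl G lam e -> len G e = Rmult (INR (kof e)) (unit_len lam).
Proof.
rewrite /inGl /pbool /kof.
case: excluded_middle_informative => // H _.
exact: proj2_sig (constructive_indefinite_description _ H).
Qed.

Definition wk (w : seq dart) : nat := \sum_(d <- w) kof d.1.

Lemma wk_cat a b : wk (a ++ b) = (wk a + wk b)%N.
Proof. by rewrite /wk big_cat. Qed.

Lemma wk_cons d w : wk (d :: w) = (kof d.1 + wk w)%N.
Proof. by rewrite /wk big_cons. Qed.

Lemma wok_cat v a b : wok v (a ++ b) = wok v a && wok (wend v a) b.
Proof. elim: a v => [|d a IH] v //=; by rewrite IH andbA. Qed.

Lemma wend_cat v a b : wend v (a ++ b) = wend (wend v a) b.
Proof. by elim: a v => [|d a IH] v //=. Qed.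

Lemma wend_take_start v w k x0 : wok v w -> (k < size w)%N ->
  wend v (take k w) = dstart G (nth x0 w k).
Proof.
elim: w v k => [|d w IH] v k //= /andP [/eqP Hd Hw].
case: k => [|k] /= Hk; first by rewrite Hd.
exact: IH.
Qed.

Lemma wend_take_end v w k x0 : (k < size w)%N ->
  wend v (take k.+1 w) = dend G (nth x0 w k).
Proof.
elim: w v k => [|d w IH] v k //=.
case: k => [|k] /= Hk; first by rewrite take0.
exact: IH.
Qed.

Lemma dend_flip e b : dend G (e,b) = dstart G (e, ~~b). Proof. by case: b. Qed.
Lemma dend_flip2 e b : dend G (e,~~b) = dstart G (e, b). Proof. by case: b. Qed.

Lemma wend_full v w : wend v (take (size w) w) = wend v w.
Proof. by rewrite take_size. Qed.

Local Notation R_d := (fun d1 d2 : dart => dend G d1 == dstart G d2).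

Lemma path_wok d p z :
  path R_d d (rcons p z) = wok (dend G d) p && (wend (dend G d) p == dstart G z).
Proof.
elim: p d => [|d' p IH] d /=; first by rewrite andbT.
rewrite IH andbA; congr (_ && _); congr (_ && _); exact: eq_sym.
Qed.

Lemma cycle_wok d p :
  cycle R_d (d :: p) = wok (dstart G d) (d :: p) && (wend (dstart G d) (d :: p) == dstart G d).
Proof. by rewrite /= path_wok eqxx. Qed.

Lemma extract n : forall v w, (size w <= n)%N -> wok v w -> wend v w = v ->
  all inEl w -> odd (wk w) ->
  exists p, is_cycle G lam p /\ odd (wk p) /\ {subset map dS p <= map dS w}.
Proof.
elim: n => [|n IH] v w; (case: w => [|x0 w0]; first by move=> _ _ _ _; rewrite /wk big_nil); first by [].
move Hw: (x0 :: w0) => w Hs Hok Hend Hall Hodd.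
case Hu1: (uniq (map dS w)); last first.
{ move/negbT: Hu1 => /(uniqPn (dS x0)) [i [j [Hij Hj Heq]]].
  rewrite size_map in Hj.
  have Hi : (i < size w)%N := ltn_trans Hij Hj.
  rewrite !(nth_map x0) // in Heq.
  pose a := take i w. pose c := take (j - i) (drop i w). pose d := drop j w.
  have Ew : w = a ++ c ++ d.
  { rewrite /a /c /d -{1}(cat_take_drop i w); congr (_ ++ _).
    rewrite -{1}(cat_take_drop (j - i) (drop i w)) drop_drop; congr (_ ++ _).
    by congr drop; lia. }
  have Hwa : wend v a = dS (nth x0 w i) by rewrite /a (wend_take_start x0 Hok Hi).
  have Hwac : wend v (a ++ c) = dS (nth x0 w j).
  { have -> : a ++ c = take j w.
    { by rewrite /a /c -takeD; congr take; lia. }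
    by rewrite (wend_take_start x0 Hok Hj). }
  move: Hok Hend Hall Hodd; rewrite Ew wok_cat wok_cat wend_cat wend_cat.
  rewrite !all_cat !wk_cat.
  move=> /and3P [Ha Hc Hd] Hend' /and3P [Aa Ac Ad] Hodd'.
  have Hcc : wend (wend v a) c = wend v a by rewrite -wend_cat Hwac Hwa Heq.
  have Hsz : size w = (size a + size c + size d)%N by rewrite Ew !size_cat addnA.
  have Hsc : size c = (j - i)%N.
  { rewrite /c size_take size_drop; case: ltnP => //; lia. }
  have Hsubc : {subset map dS c <= map dS (a ++ c ++ d)}.
  { by move=> x Hx; rewrite !map_cat !mem_cat Hx orbT. }
  have Hsubad : {subset map dS (a ++ d) <= map dS (a ++ c ++ d)}.
  { move=> x; rewrite !map_cat !mem_cat => /orP [->|->] //; by rewrite !orbT. }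
  case Hoc: (odd (wk c)).
  - have [p [Hp1 [Hp2 Hp3]]] := IH (wend v a) c ltac:(lia) Hc Hcc Ac Hoc.
    exists p; split => //; split => // x Hx; exact: Hsubc _ (Hp3 x Hx).
  - have Hod : odd (wk (a ++ d)).
    { rewrite wk_cat; move: Hodd'; rewrite !oddD Hoc; by case: (odd (wk a)); case: (odd (wk d)). }
    have Hok' : wok v (a ++ d) by rewrite wok_cat Ha -Hcc.
    have Hend2 : wend v (a ++ d) = v by rewrite wend_cat -Hcc.
    have Hall2 : all inEl (a ++ d) by rewrite all_cat Aa Ad.
    have [p [Hp1 [Hp2 Hp3]]] := IH v (a ++ d) ltac:(rewrite size_cat; lia) Hok' Hend2 Hall2 Hod.
    exists p; split => //; split => // x Hx; exact: Hsubad _ (Hp3 x Hx). }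
case Hu2: (uniq (map fst w)).
{ exists w; split; last by split.
  subst w; split => //; split => //; split => //; split => //.
  move: Hok; rewrite /= => /andP [/eqP Hx0 Hok].
  rewrite path_wok Hok /=.
  by move: Hend => /= ->; rewrite Hx0. }
exfalso.
move/negbT: Hu2 => /(uniqPn x0.1) [i [j [Hij Hj Heq]]].
rewrite size_map in Hj.
have Hi : (i < size w)%N := ltn_trans Hij Hj.
rewrite !(nth_map x0) // in Heq.
have Hst : forall k l, (k < size w)%N -> (l < size w)%N ->
    dS (nth x0 w k) = dS (nth x0 w l) -> k = l.
{ move=> k l Hk Hl E; apply/eqP.
  rewrite -(nth_uniq (dS x0) (s := map dS w)) ?size_map // !(nth_map x0) //.
  by rewrite E. }
have Hnext : forall k, (k < size w)%N ->
   dend G (nth x0 w k) = dS (nth x0 w (if (k.+1 < size w)%N then k.+1 else 0)).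
{ move=> k Hk; rewrite -(wend_take_end v x0 Hk).
  case: ltnP => Hk1.
  - by rewrite (wend_take_start x0 Hok Hk1).
  - have -> : k.+1 = size w by lia.
    rewrite take_size Hend.
    move: Hok; rewrite -Hw /= => /andP [/eqP Hx _]; by rewrite /dS Hx. }
case Edi: (nth x0 w i) Heq => [e b]; case Edj: (nth x0 w j) => [e' b'] /= Hee.
subst e'.
have Hbb : b' = ~~ b.
{ case: b b' Edi Edj => [] [] // Edi Edj.
  - have := Hst i j Hi Hj; rewrite Edi Edj => /(_ erefl); lia.
  - have := Hst i j Hi Hj; rewrite Edi Edj => /(_ erefl); lia. }
subst b'.
have H1 := Hnext i Hi.
rewrite Edi dend_flip -Edj in H1.
have Hif : forall k, ((if (k.+1 < size w)%N then k.+1 else 0) < size w)%N.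
{ move=> k; case: ifP => //; lia. }
have Hj1 := Hst _ _ Hj (Hif i) H1.
move: Hj1; case: ifP => Hi1 Hj1; last lia.
have H2 := Hnext j Hj.
rewrite Edj dend_flip2 -Edi in H2.
have Hi2 := Hst _ _ Hi (Hif j) H2.
move: Hi2; case: ifP => Hj2 Hi2; first lia.
have Hsz : size w = 2 by lia.
move: Hodd.
move: Hsz Edi Edj; subst i j w.
move=> Hodd Hsz Edi Edj; move: Hodd Hsz Edi Edj; clear.
case: w0 => [|x1 [|x2 w2]] //= _ E0 E1.
rewrite wk_cons wk_cons /wk big_nil E0 E1 /= addn0 oddD.
by case: (odd (kof e)).
Qed.


Lemma adjl_sym : symmetric (adjl G lam).
Proof.
move=> u v; apply/existsP/existsP => [] [e He]; exists e;
  move: He => /andP [-> H] /=; by rewrite orbC.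
Qed.

Lemma csym : connect_sym (adjl G lam).
Proof. exact: sym_connect_sym adjl_sym. Qed.

Lemma dart_adj d : inEl d -> adjl G lam (dstart G d) (dend G d).
Proof.
move=> Hd; apply/existsP; exists d.1; move: Hd; rewrite /inEl => -> /=.
by case: d => e [] /=; rewrite !eqxx ?orbT.
Qed.

Lemma walk_connect v w : wok v w -> all inEl w -> connect (adjl G lam) v (wend v w).
Proof.
elim: w v => [|d w IH] v /=; first by rewrite connect0.
move=> /andP [/eqP Hd Hw] /andP [Ad Aw].
apply: connect_trans (IH _ Hw Aw).
by apply: connect1; rewrite -Hd; exact: dart_adj.
Qed.

Lemma walk_starts v w : wok v w -> all inEl w ->
  forall x, x \in map dS w -> connect (adjl G lam) v x.
Proof.
elim: w v => [|d w IH] v //=.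
move=> /andP [/eqP Hd Hw] /andP [Ad Aw] x; rewrite in_cons => /orP [/eqP ->|Hx].
- by rewrite /dS Hd connect0.
- apply: connect_trans (IH _ Hw Aw x Hx).
  by apply: connect1; rewrite -Hd; exact: dart_adj.
Qed.

Lemma connect_walk v u : connect (adjl G lam) v u ->
  exists w, [/\ wok v w, all inEl w & wend v w = u].
Proof.
move=> /connectP [p Hp ->]; elim: p v Hp => [|x p IH] v /=.
- by move=> _; exists [::].
- move=> /andP [/existsP [e /andP [He Hor]] Hp].
  have [w [Hw1 Hw2 Hw3]] := IH x Hp.
  case/orP: Hor => /andP [/eqP Hs /eqP Ht].
  + exists ((e, true) :: w); split => //=; first by rewrite /dstart /dend /= Hs eqxx Ht.
    by rewrite /inEl He.
    by rewrite /dend /= Ht.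
  + exists ((e, false) :: w); split => //=; first by rewrite /dstart /dend /= Ht eqxx Hs.
    by rewrite /inEl He.
    by rewrite /dend /= Hs.
Qed.

Lemma dart_Vl d : inEl d -> (dstart G d \in Vl G lam) && (dend G d \in Vl G lam).
Proof.
move=> Hd; rewrite !inE; apply/andP; split; apply/existsP; exists d.1;
 move: Hd; rewrite /inEl => -> /=; case: d => e [] ; by rewrite /dstart /dend /= eqxx ?orbT.
Qed.

Lemma walk_Vl v w : wok v w -> all inEl w -> v \in Vl G lam -> wend v w \in Vl G lam.
Proof.
elim: w v => [|d w IH] v //= /andP [/eqP Hd Hw] /andP [Ad Aw] _.
apply: IH => //; by case/andP: (dart_Vl Ad).
Qed.

Lemma walk_Vl0 v w : wok v w -> all inEl w -> wend v w <> v -> v \in Vl G lam.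
Proof.
case: w => [|d w] //= /andP [/eqP Hd Hw] /andP [Ad Aw] _.
rewrite -Hd; by case/andP: (dart_Vl Ad).
Qed.

Lemma cyc_len p : all inEl p -> cycle_len G p = Rmult (INR (wk p)) (unit_len lam).
Proof.
elim: p => [|d p IH] /=.
- by rewrite /cycle_len /wk !big_nil Rmult_0_l.
- move=> /andP [Ad Ap]; rewrite /cycle_len big_cons -/(cycle_len G p) IH //.
  rewrite wk_cons (kofP Ad) -plusE plus_INR Rmult_plus_distr_r //.
Qed.

Lemma unit_pos : Rlt 0 lam -> Rlt 0 (unit_len lam).
Proof.
move=> H; rewrite /unit_len; apply: Rdiv_lt_0_compat; [exact: PI_RGT_0 | exact: sqrt_lt_R0].
Qed.

Lemma odd_closed_cycle r w : Rlt 0 lam -> wok r w -> wend r w = r -> all inEl w ->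
  odd (wk w) -> has_odd_cycle G lam [set x | connect (adjl G lam) r x].
Proof.
move=> Hl Hw He Ha Ho.
have [p [Hp [Hop Hsub]]] := extract (leqnn (size w)) Hw He Ha Ho.
exists p; split => //; split.
- rewrite cyc_len; last by case: Hp => _ [].
  exists (wk p)./2; congr Rmult; congr INR.
  by rewrite -{1}(odd_double_half (wk p)) Hop; lia.
- move=> d Hd; rewrite inE; apply: (walk_starts Hw Ha); apply: Hsub.
  by apply: map_f.
Qed.

Lemma cycle_closed C : Rlt 0 lam -> has_odd_cycle G lam C ->
  exists x w, [/\ x \in C, wok x w, wend x w = x, all inEl w & odd (wk w)].
Proof.
move=> Hl [p [[Hne [Hall [_ [_ Hcyc]]]] [[k Hk] HC]]].
case: p Hne Hall Hcyc Hk HC => [|d p] // _ Hall Hcyc Hk HC.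
exists (dstart G d), (d :: p).
move: Hcyc; rewrite cycle_wok => /andP [Hw /eqP He].
split => //; first by apply: HC; rewrite in_cons eqxx.
rewrite cyc_len // in Hk.
have Hu := unit_pos Hl.
have : INR (wk (d :: p)) = INR (2 * k + 1).
{ apply: (Rmult_eq_reg_r (unit_len lam)) => //; by apply: Rgt_not_eq. }
move/INR_eq => ->; lia.
Qed.


Section RealPart.
Local Open Scope R_scope.

Definition sg (n : nat) : R := if odd n then -1 else 1.

Lemma sg_add m n : sg (m + n)%N = sg m * sg n.
Proof. rewrite /sg oddD; case: (odd m); case: (odd n) => /=; ring. Qed.

Lemma sg_sq n : sg n * sg n = 1.
Proof. rewrite /sg; case: (odd n); ring. Qed.

Definition Yrel (y : 'I_(nV G) -> R) : Prop :=
  forall e, inGl G lam e -> sg (kof e) * y (tgt G e) = y (src G e).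

Lemma prop_dart y d : Yrel y -> inEl d -> y (dend G d) = sg (kof d.1) * y (dstart G d).
Proof.
move=> Hy Hd; have := Hy _ Hd; have := sg_sq (kof d.1).
case: d Hd => e [] /= _; rewrite /dend /dstart /=; move=> H1 H2.
- rewrite -H2 -Rmult_assoc H1; ring.
- by rewrite H2.
Qed.

Lemma prop_walk y v w : Yrel y -> wok v w -> all inEl w -> y (wend v w) = sg (wk w) * y v.
Proof.
move=> Hy; elim: w v => [|d w IH] v /=.
- by move=> _ _; rewrite /wk big_nil /sg /=; ring.
- move=> /andP [/eqP Hd Hw] /andP [Ad Aw].
  rewrite (IH _ Hw Aw) (prop_dart Hy Ad) Hd wk_cons sg_add; ring.
Qed.

Lemma odd_walk_zero y x w : Yrel y -> wok x w -> wend x w = x -> all inEl w ->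
  odd (wk w) -> y x = 0.
Proof.
move=> Hy Hw He Ha Ho; have := prop_walk Hy Hw Ha; rewrite He /sg Ho; lra.
Qed.

Definition balanced (r : 'I_(nV G)) : Prop :=
  ~ has_odd_cycle G lam [set x | connect (adjl G lam) r x].

Definition pot (r u : 'I_(nV G)) : R :=
  if pbool (exists w, [/\ wok u w, all inEl w & wend u w = r]) then
    (if pbool (exists w, [/\ wok u w, all inEl w, wend u w = r & odd (wk w)]) then -1 else 1)
  else 0.

Lemma pbool_true (P : Prop) : P -> pbool P = true.
Proof. by rewrite /pbool; case: excluded_middle_informative. Qed.

Lemma pbool_false (P : Prop) : ~ P -> pbool P = false.
Proof. by rewrite /pbool; case: excluded_middle_informative. Qed.

Lemma pboolP (P : Prop) : pbool P = true <-> P.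
Proof. by rewrite /pbool; case: excluded_middle_informative. Qed.

Lemma even_closed r w : 0 < lam -> balanced r -> wok r w -> wend r w = r -> all inEl w ->
  ~~ odd (wk w).
Proof.
move=> Hl Hb Hw He Ha; apply/negP => Ho; apply: Hb; exact: odd_closed_cycle Hl Hw He Ha Ho.
Qed.

Lemma pot_walk r u w : 0 < lam -> balanced r -> wok u w -> all inEl w -> wend u w = r ->
  pot r u = sg (wk w).
Proof.
move=> Hl Hb Hw Ha He.
rewrite /pot pbool_true; last by exists w.
have Hc : connect (adjl G lam) r u by rewrite csym -He; exact: walk_connect.
have [s [Hs1 Hs2 Hs3]] := connect_walk Hc.
have par : forall q, wok u q -> all inEl q -> wend u q = r -> odd (wk q) = odd (wk s).
{ move=> q Hq1 Hq2 Hq3.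
  have := even_closed (w := s ++ q) Hl Hb.
  rewrite wok_cat wend_cat Hs3 Hs1 Hq1 Hq3 all_cat Hs2 Hq2 wk_cat oddD => /(_ erefl erefl erefl).
  by case: (odd (wk s)); case: (odd (wk q)). }
case: ifP => Ho.
- move/pboolP: Ho => [q [Hq1 Hq2 Hq3 Hq4]].
  by rewrite /sg (par w) // -(par q) // Hq4.
- rewrite /sg; case Hw': (odd (wk w)) => //.
  move/negbT/negP: Ho; case; apply/pboolP; by exists w.
Qed.

Lemma pot_none r u : ~ (exists w, [/\ wok u w, all inEl w & wend u w = r]) -> pot r u = 0.
Proof. by move=> H; rewrite /pot pbool_false. Qed.

Lemma pot_Yrel r : 0 < lam -> balanced r -> Yrel (pot r).
Proof.
move=> Hl Hb e He.
case: (classic (exists w, [/\ wok (tgt G e) w, all inEl w & wend (tgt G e) w = r])).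
- move=> [w [Hw1 Hw2 Hw3]].
  rewrite (pot_walk Hl Hb Hw1 Hw2 Hw3).
  rewrite (pot_walk (w := (e, true) :: w)) //=.
  + by rewrite wk_cons sg_add.
  + by rewrite /dstart /dend /= eqxx.
  + by rewrite /inEl He.
- move=> Hn; rewrite (pot_none Hn) pot_none; first ring.
  move=> [w [Hw1 Hw2 Hw3]]; apply: Hn; exists ((e, false) :: w); split => //=.
  + by rewrite /dstart /dend /= eqxx.
  + by rewrite /inEl He.
Qed.


Definition comp (v : 'I_(nV G)) : {set 'I_(nV G)} := [set x | connect (adjl G lam) v x].

Definition J : {set 'I_(nV G)} :=
  [set v | (v \notin Vl G lam) ||
     [&& v \in Vl G lam, fingraph.root (adjl G lam) v == v & ~~ pbool (has_odd_cycle G lam (comp v))]].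

Lemma Jmem u : (u \in J) = (u \notin Vl G lam) ||
     [&& u \in Vl G lam, fingraph.root (adjl G lam) u == u & ~~ pbool (has_odd_cycle G lam (comp u))].
Proof. by rewrite /J in_set. Qed.

Lemma compmem r x : (x \in comp r) = connect (adjl G lam) r x.
Proof. by rewrite /comp in_set. Qed.

Definition Erow (u v : 'I_(nV G)) : R :=
  if u \in Vl G lam then pot u v else (if v == u then 1 else 0).

Lemma Erow_Y u : 0 < lam -> u \in J -> Yrel (Erow u).
Proof.
move=> Hl; rewrite /Erow Jmem; case Hu: (u \in Vl G lam) => /=.
- move=> /andP [_ Hb]; apply: pot_Yrel => // Ho.
  by move: Hb; rewrite pbool_true.
- move=> _ e He.
  have := dart_Vl (d := (e, true)); rewrite /inEl He /dstart /dend /= => /(_ erefl) /andP [H1 H2].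
  have -> : (tgt G e == u) = false by apply/negP => /eqP E; move: H2; rewrite E Hu.
  have -> : (src G e == u) = false by apply/negP => /eqP E; move: H1; rewrite E Hu.
  ring.
Qed.

Lemma Erow_J u u' : 0 < lam -> u \in J -> u' \in J -> Erow u u' = if u' == u then 1 else 0.
Proof.
move=> Hl HuJ Hu'J; rewrite /Erow; case: ifP => // Hu.
have Hb : balanced u.
{ move: HuJ; rewrite Jmem Hu /= => /andP [_ Hb] Ho; by move: Hb; rewrite pbool_true. }
case: eqP => [->|Hne].
- by rewrite (@pot_walk u u [::] Hl Hb) // /sg /wk big_nil.
- apply: pot_none => [[w [Hw1 Hw2 Hw3]]].
  move: Hu'J; rewrite Jmem => /orP [Hn|/and3P [Hv Hr _]].
  + have := walk_Vl0 Hw1 Hw2; rewrite Hw3 => /(_ (fun E => Hne (esym E))).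
    by rewrite (negbTE Hn).
  + have Hc : connect (adjl G lam) u' u by rewrite -Hw3; exact: walk_connect.
    move/(fingraph.rootP csym): Hc; rewrite (eqP Hr).
    have [Hr2 _] : fingraph.root (adjl G lam) u = u /\ True.
    { move: HuJ; rewrite Jmem Hu /= => /andP [/eqP -> _]; by split. }
    by rewrite Hr2.
Qed.

Lemma J_zero y : 0 < lam -> Yrel y -> (forall u, u \in J -> y u = 0) -> forall v, y v = 0.
Proof.
move=> Hl Hy HJ v.
case Hv: (v \in Vl G lam); last by apply: HJ; rewrite Jmem Hv.
set r := fingraph.root (adjl G lam) v.
have [w [Hw1 Hw2 Hw3]] := connect_walk (fingraph.connect_root (adjl G lam) v).
have Hyr := prop_walk Hy Hw1 Hw2; rewrite Hw3 in Hyr.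
have Hvr : y v = sg (wk w) * y r by rewrite Hyr -Rmult_assoc sg_sq; ring.
have Hr : r \in Vl G lam by rewrite /r -Hw3; exact: walk_Vl.
case Ho: (pbool (has_odd_cycle G lam (comp r))).
- move/pboolP: Ho => /(cycle_closed Hl) [x [q [Hx Hq1 Hq2 Hq3 Hq4]]].
  have Hyx := odd_walk_zero Hy Hq1 Hq2 Hq3 Hq4.
  rewrite compmem in Hx.
  have Hvx : connect (adjl G lam) v x by apply: connect_trans (fingraph.connect_root _ v) Hx.
  have [s [Hs1 Hs2 Hs3]] := connect_walk Hvx.
  have := prop_walk Hy Hs1 Hs2; rewrite Hs3 Hyx => H0.
  have : sg (wk s) * 0 = sg (wk s) * (sg (wk s) * y v) by rewrite H0.
  rewrite -Rmult_assoc sg_sq; lra.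
- rewrite Hvr HJ; first ring.
  rewrite Jmem Hr /= /r fingraph.root_root ?eqxx /=; last exact: csym.
  by rewrite -/r Ho.
Qed.

End RealPart.

Definition R0s : {set 'I_(nV G)} := [set v in Vl G lam | fingraph.root (adjl G lam) v == v].
Definition R0o : {set 'I_(nV G)} := [set v in R0s | pbool (has_odd_cycle G lam (comp v))].

Lemma comp_root v : comp (fingraph.root (adjl G lam) v) = comp v.
Proof.
apply/setP => x; rewrite !compmem; apply/idP/idP => H.
- exact: connect_trans (fingraph.connect_root _ v) H.
- apply: connect_trans _ H; by rewrite csym fingraph.connect_root.
Qed.

Lemma root_Vl v : v \in Vl G lam -> fingraph.root (adjl G lam) v \in Vl G lam.
Proof.
move=> Hv; have [w [Hw1 Hw2 Hw3]] := connect_walk (fingraph.connect_root (adjl G lam) v).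
rewrite -Hw3; exact: walk_Vl.
Qed.

Lemma comps_R0 : comps G lam = comp @: R0s.
Proof.
apply/setP => C; apply/imsetP/imsetP => [[v Hv ->]|[v Hv ->]].
- exists (fingraph.root (adjl G lam) v); last by rewrite -/(comp v) comp_root.
  by rewrite /R0s in_set root_Vl //= fingraph.root_root //; exact: csym.
- exists v => //; move: Hv; rewrite /R0s in_set => /andP [] //.
Qed.

Lemma comp_inj : {in R0s &, injective comp}.
Proof.
move=> r1 r2; rewrite /R0s !in_set => /andP [_ /eqP H1] /andP [_ /eqP H2] E.
have : r2 \in comp r1 by rewrite E compmem connect0.
rewrite compmem => /(fingraph.rootP csym); by rewrite H1 H2.
Qed.

Lemma beta0E : beta0 G lam = #|R0s|.
Proof. by rewrite /beta0 comps_R0 card_in_imset //; exact: comp_inj. Qed.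

Lemma beta0oddE : beta0odd G lam = #|R0o|.
Proof.
rewrite /beta0odd.
have -> : [set C in comps G lam | pbool (has_odd_cycle G lam C)] = comp @: R0o.
{ apply/setP => C; rewrite in_set comps_R0; apply/andP/imsetP.
  - move=> [/imsetP [v Hv ->] Ho]; exists v => //; by rewrite /R0o in_set Hv.
  - move=> [v]; rewrite /R0o in_set => /andP [Hv Ho] ->; split => //; exact: imset_f. }
rewrite card_in_imset //; apply: (sub_in2 _ comp_inj) => v; rewrite /R0o in_set => /andP [] //.
Qed.

Lemma count_J : [/\ #|J| = (nV G - #|Vl G lam| + (beta0 G lam - beta0odd G lam))%N, (beta0odd G lam <= beta0 G lam)%N & (beta0 G lam <= #|Vl G lam|)%N].
Proof.
have S1 : R0o \subset R0s by apply/subsetP => v; rewrite /R0o in_set => /andP [].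
have S2 : R0s \subset Vl G lam by apply/subsetP => v; rewrite /R0s in_set => /andP [].
have EJ : J = ~: Vl G lam :|: (R0s :\: R0o).
{ apply/setP => v; rewrite Jmem in_setU in_setC in_setD.
  case Hv: (v \in Vl G lam) => //=.
  have mR0 : (v \in R0s) = (v \in Vl G lam) && (fingraph.root (adjl G lam) v == v) by rewrite /R0s in_set.
  have mR0o : (v \in R0o) = (v \in R0s) && pbool (has_odd_cycle G lam (comp v)) by rewrite /R0o in_set.
  rewrite mR0o mR0 Hv /=.
  by case: (fingraph.root (adjl G lam) v == v); case: pbool. }
have D : ~: Vl G lam :&: (R0s :\: R0o) = set0.
{ apply/setP => v; rewrite in_setI in_setC in_setD in_set0.
  case Hv: (v \in R0s); last by rewrite !andbF.
  by rewrite (subsetP S2 v Hv). }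
rewrite beta0E beta0oddE EJ cardsU D cards0 subn0 cardsD (setIidPr S1).
have HC := cardsC (Vl G lam); rewrite card_ord in HC.
have := subset_leq_card S1; have := subset_leq_card S2.
have E : #|~: Vl G lam| = (nV G - #|Vl G lam|)%N by rewrite cardsCs setCK card_ord.
move=> H1 H2; rewrite E; by split.
Qed.

End Graph.


Section LinAlg.
Import GRing.Theory.
Local Open Scope ring_scope.

Lemma rank_coord (F : fieldType) n k (Y : 'M[F]_n) (h : 'I_k -> 'I_n) (E : 'M[F]_(k, n)) :
  (E <= Y)%MS ->
  (forall i j, E i (h j) = (i == j)%:R) ->
  (forall y : 'rV[F]_n, (y <= Y)%MS -> (forall j, y 0 (h j) = 0) -> y = 0) ->
  \rank Y = k.
Proof.
move=> HEY HE Hz.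
pose P : 'M[F]_(n, k) := \matrix_(v, j) (v == h j)%:R.
have HP : forall m (z : 'M[F]_(m, n)) i j, (z *m P) i j = z i (h j).
{ move=> m z i j; rewrite !mxE (bigD1 (h j)) //= big1 => [|v /negbTE Hv].
  - by rewrite !mxE eqxx mulr1 addr0.
  - by rewrite !mxE Hv mulr0. }
have HEP : E *m P = 1%:M.
{ apply/matrixP => i j; rewrite HP HE mxE; by case: eqP. }
have rE : \rank E = k.
{ apply/eqP; rewrite eqn_leq rank_leq_row /=.
  have := mxrankM_maxl E P; by rewrite HEP mxrank1. }
have HYE : (Y <= E)%MS.
{ apply/row_subP => i; set y := row i Y.
  set z := y - (y *m P) *m E.
  have Hz1 : (z <= Y)%MS.
  { apply: addmx_sub; first exact: row_sub.
    rewrite -mulNmx; exact: submx_trans (submxMl _ E) HEY. }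
  have Hz2 : z *m P = 0.
  { by rewrite /z mulmxBl -(mulmxA (y *m P)) HEP mulmx1 subrr. }
  have Hz0 : z = 0.
  { apply: Hz => // j; by rewrite -HP Hz2 mxE. }
  have -> : y = (y *m P) *m E by apply/eqP; rewrite -subr_eq0 -/z Hz0.
  exact: submxMl. }
apply/eqP; rewrite eqn_leq -{1}rE mxrankS //= -{1}rE mxrankS //.
Qed.

End LinAlg.

Import GRing.Theory.

Section Main.
Variable G : mgraph.
Variable lam : R.
Hypothesis hlam : Rlt 0 lam.

Definition om : R := sqrt lam.
Lemma om_pos : Rlt 0 om.
Proof. exact: sqrt_lt_R0. Qed.
Lemma lam_om : lam = Rmult om om.
Proof. rewrite /om sqrt_sqrt //; lra. Qed.

Definition ev (j : 'I_#|El G lam|) : 'I_(nE G) := enum_val j.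
Definition cE (e : 'I_(nE G)) : R := cos (Rmult om (len G e)).

Local Open Scope ring_scope.

Definition Amat : 'M[R]_(#|El G lam|, nV G) :=
  \matrix_(j, v) ((tgt G (ev j) == v)%:R * cE (ev j) - (src G (ev j) == v)%:R).

Lemma bigRE (I : finType) (P : pred I) (F : I -> R) :
  \big[Rplus/0%R]_(i | P i) F i = \sum_(i | P i) F i.
Proof. by []. Qed.


Lemma odd_nat k : Nat.odd k = odd k.
Proof. elim: k => // k IH; by rewrite Nat.odd_succ -Nat.negb_odd IH. Qed.

Lemma om_len e k : len G e = Rmult (INR k) (unit_len lam) -> Rmult om (len G e) = Rmult (INR k) PI.
Proof.
move=> ->; rewrite /unit_len -/om; have := om_pos => H.
field; lra.
Qed.

Lemma cE_El e : inGl G lam e -> cE e = sg (kof lam e) /\ sin (Rmult om (len G e)) = 0.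
Proof.
move=> He; rewrite /cE (om_len (kofP He)) cos_kPI sin_kPI odd_nat /sg; split => //.
Qed.

Lemma not_El_sin e : ~~ inGl G lam e -> sin (Rmult om (len G e)) <> 0.
Proof.
move=> He Hs; move: He; apply/negP/negPn.
have Hl := len_pos e; have Ho := om_pos.
have [k Hk] := sin0_pos _ (Rmult_lt_0_compat _ _ Ho Hl) Hs.
apply/pboolP; exists k; rewrite /unit_len -/om.
apply: (Rmult_eq_reg_l om); last lra.
rewrite Hk; field; lra.
Qed.


Lemma ElE e : (e \in El G lam) = inGl G lam e.
Proof. by rewrite /El in_set. Qed.

Lemma sumA (a : 'I_(nE G) -> R) v : (forall e, ~~ inGl G lam e -> a e = 0) ->
  ((\row_j a (ev j)) *m Amat) 0 v =
    \sum_(e | tgt G e == v) a e * cE e - \sum_(e | src G e == v) a e.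
Proof.
move=> Ha; rewrite mxE.
under eq_bigr => j _ do rewrite !mxE.
rewrite -(big_enum_val (fun e => a e * ((tgt G e == v)%:R * cE e - (src G e == v)%:R))) /=.
rewrite big_mkcond /=.
rewrite (eq_bigr (fun e => a e * ((tgt G e == v)%:R * cE e) - a e * (src G e == v)%:R)); last first.
{ move=> e _; rewrite ElE; case: ifP => He; first by rewrite mulrBr.
  by rewrite Ha ?He // !mul0r subrr. }
rewrite sumrB (big_mkcond (fun e => tgt G e == v)) (big_mkcond (fun e => src G e == v)).
congr (_ - _); apply: eq_bigr => e _; case: eqP => _; by rewrite /= ?mulr1n ?mulr0n ?mul1r ?mulr1 ?mul0r ?mulr0.
Qed.


Lemma om_neq0 : om != 0.
Proof. apply/eqP; apply: Rgt_not_eq; exact: om_pos. Qed.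

Lemma Rspace_coef f : Rspace G lam f -> exists a : 'I_(nE G) -> R,
  [/\ (forall e x, edge_int G e x -> f e x = a e * sin (om * x)),
      (forall e, ~~ inGl G lam e -> a e = 0) &
      (forall v, \sum_(e | tgt G e == v) a e * cE e - \sum_(e | src G e == v) a e = 0)].
Proof.
move=> [g [d0 [dL [Hode [Hlim Hkir]]]]].
have Hedge : forall e, (forall x, edge_int G e x -> f e x = d0 e / om * sin (om * x)) /\
   (d0 e / om * sin (om * len G e) = 0)%R /\ dL e = d0 e * cE e.
{ move=> e; have [l1 [l2 [l3 l4]]] := Hlim e.
  apply: (edge_full om (len G e) (f e) (g e) (d0 e) (dL e) om_pos (len_pos e)) => //.
  move=> x Hx; rewrite -lam_om; exact: Hode. }
exists (fun e => d0 e / om); split.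
- by move=> e x Hx; rewrite (proj1 (Hedge e)).
- move=> e He; have [_ [H _]] := Hedge e.
  have := not_El_sin He => Hs.
  by case: (Rmult_integral _ _ H).
- move=> v; move: (Hkir v); rewrite !bigRE.
  rewrite (eq_bigr (fun e => om * (d0 e / om * cE e))); last first.
  { move=> e _; rewrite (proj2 (proj2 (Hedge e))) /=.
    rewrite mulrA mulrCA divff ?om_neq0 // mulr1 //. }
  rewrite [X in _ - X = 0 -> _](eq_bigr (fun e => om * (d0 e / om))); last first.
  { move=> e _ /=; rewrite mulrCA divff ?om_neq0 // mulr1 //. }
  rewrite -!mulr_sumr -mulrBr => /eqP; rewrite mulf_eq0 (negbTE om_neq0) /= => /eqP //.
Qed.


Lemma lim_val (f : R -> R) D l l' x0 : limit1_in f D l x0 -> l = l' -> limit1_in f D l' x0.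
Proof. by move=> H <-. Qed.

Lemma coef_Rspace (a : 'I_(nE G) -> R) :
  (forall e, ~~ inGl G lam e -> a e = 0) ->
  (forall v, \sum_(e | tgt G e == v) a e * cE e - \sum_(e | src G e == v) a e = 0) ->
  Rspace G lam (fun e x => a e * sin (om * x)).
Proof.
move=> Ha Hrel.
exists (fun e x => a e * om * cos (om * x)), (fun e => a e * om),
       (fun e => a e * om * cE e).
split; [|split].
- move=> e x Hx; rewrite lam_om; exact: edge_conv.
- move=> e; split; [|split; [|split]].
  + apply: lim_val (cont_lim _ _ _ (cont_sin1 (a e) om 0)) _.
    by rewrite Rmult_0_r sin_0 Rmult_0_r.
  + apply: lim_val (cont_lim _ _ _ (cont_sin1 (a e) om (len G e))) _.
    case He: (inGl G lam e).
    * by rewrite (proj2 (cE_El He)) Rmult_0_r.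
    * by rewrite Ha ?He // Rmult_0_l.
  + apply: lim_val (cont_lim _ _ _ (cont_cos1 (a e) om 0)) _.
    by rewrite Rmult_0_r cos_0 Rmult_1_r.
  + exact: (cont_lim _ _ _ (cont_cos1 (a e) om (len G e))).
- move=> v; rewrite !bigRE.
  rewrite (eq_bigr (fun e => om * (a e * cE e))); last first.
  { move=> e _ /=; by rewrite mulrAC mulrC. }
  rewrite [X in _ - X = _](eq_bigr (fun e => om * a e)); last first.
  { move=> e _ /=; by rewrite mulrC. }
  by rewrite -!mulr_sumr -mulrBr Hrel mulr0.
Qed.


Lemma sum_delta n (F : 'I_n -> R) t : \sum_v F v * (t == v)%:R = F t.
Proof.
rewrite (bigD1 t) //= eqxx mulr1n mulr1 big1 ?addr0 // => v /negbTE.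
by rewrite eq_sym => ->; rewrite mulr0n mulr0.
Qed.

Lemma entryT (y : 'rV[R]_(nV G)) j :
  (y *m Amat^T) 0 j = y 0 (tgt G (ev j)) * cE (ev j) - y 0 (src G (ev j)).
Proof.
rewrite mxE.
under eq_bigr => v _ do rewrite !mxE mulrBr mulrA mulrAC.
by rewrite sumrB !sum_delta.
Qed.

Lemma ev_El j : inGl G lam (ev j).
Proof. rewrite -ElE; exact: enum_valP. Qed.

Lemma Yrel_ker (y : 'rV[R]_(nV G)) :
  (y <= kermx Amat^T)%MS <-> Yrel lam (fun v => y 0 v).
Proof.
rewrite sub_kermx; split.
- move=> /eqP H e He.
  have He' : e \in El G lam by rewrite ElE.
  have := f_equal (fun M : 'M_(1, _) => M 0 (enum_rank_in He' e)) H.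
  rewrite entryT mxE /ev enum_rankK_in // (proj1 (cE_El He)) => /eqP.
  rewrite subr_eq0 => /eqP <-; by rewrite mulrC.
- move=> H; apply/eqP/rowP => j; rewrite entryT mxE.
  rewrite (proj1 (cE_El (ev_El j))) -(H _ (ev_El j)).
  by rewrite mulrC subrr.
Qed.

Lemma rankY : \rank (kermx Amat^T) = #|J G lam|.
Proof.
pose h := fun i : 'I_#|J G lam| => (enum_val i : 'I_(nV G)).
have hJ : forall i, h i \in J G lam by move=> i; exact: enum_valP.
pose E : 'M[R]_(#|J G lam|, nV G) := \matrix_(i, v) Erow lam (h i) v.
apply: (rank_coord (h := h) (E := E)).
- apply/row_subP => i; apply/Yrel_ker.
  move=> e He /=; rewrite !mxE; exact: (Erow_Y hlam (hJ i) He).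
- move=> i j; rewrite mxE (Erow_J hlam (hJ i) (hJ j)).
  rewrite (inj_eq enum_val_inj) eq_sym.
  by case: eqP.
- move=> y /Yrel_ker Hy Hz; apply/rowP => v; rewrite mxE.
  apply: (J_zero hlam Hy) => u Hu.
  have := Hz (enum_rank_in Hu u); by rewrite /h enum_rankK_in.
Qed.


Definition arow (r : 'rV[R]_#|El G lam|) (e : 'I_(nE G)) : R := \sum_(j | ev j == e) r 0 j.

Lemma arow_nEl r e : ~~ inGl G lam e -> arow r e = 0.
Proof.
move=> He; rewrite /arow big_pred0 // => j; apply/negP => /eqP E.
by move: He; rewrite -E ev_El.
Qed.

Lemma arow_ev r j : arow r (ev j) = r 0 j.
Proof.
rewrite /arow (big_pred1 j) // => j'; by rewrite /ev (inj_eq enum_val_inj).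
Qed.

Lemma arow_a (a : 'I_(nE G) -> R) e : (forall e, ~~ inGl G lam e -> a e = 0) ->
  arow (\row_j a (ev j)) e = a e.
Proof.
move=> Ha; case He: (inGl G lam e).
- have He' : e \in El G lam by rewrite ElE.
  have <- : ev (enum_rank_in He' e) = e by rewrite /ev enum_rankK_in.
  by rewrite arow_ev mxE.
- by rewrite arow_nEl ?He // Ha ?He.
Qed.

Lemma arow_row r : \row_j arow r (ev j) = r.
Proof. by apply/rowP => j; rewrite mxE arow_ev. Qed.

Lemma ker_rel r : r *m Amat = 0 ->
  forall v, \sum_(e | tgt G e == v) arow r e * cE e - \sum_(e | src G e == v) arow r e = 0.
Proof.
move=> H v; rewrite -sumA; last exact: arow_nEl.
by rewrite arow_row H mxE.
Qed.

Lemma resonance_dim S d : has_dim G S d ->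
  ((exists f, S f /\ exists e x, edge_int G e x /\ f e x <> 0%R) <-> d <> 0%N).
Proof.
move=> [b [Hb [Hind Hspan]]]; split.
- move=> [f [Hf [e [x [Hx Hne]]]]] Hd; subst d.
  have [c Hc] := Hspan f Hf; apply: Hne; rewrite Hc // big_ord0 //.
- move=> Hd; have i0 : 'I_d by apply: (@Ordinal d 0); lia.
  exists (b i0); split => //.
  apply: NNPP => Hn.
  have := Hind (fun i => if i == i0 then 1%R else 0%R).
  have H0 : forall e x, edge_int G e x -> b i0 e x = 0%R.
  { move=> e x Hx; apply: NNPP => H; apply: Hn; by exists e, x. }
  move=> /(_ _ i0); rewrite eqxx => H; apply: R1_neq_R0; apply: H => e x Hx.
  rewrite (bigD1 i0) //= eqxx big1 => [|i /negbTE ->].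
  + by rewrite H0 // Rmult_0_r Rplus_0_r.
  + by rewrite Rmult_0_l.
Qed.


Lemma dims : (beta0odd G lam <= beta1 G lam)%N /\
  (beta1 G lam - beta0odd G lam)%N = \rank (kermx Amat).
Proof.
have [HJ H1 H2] := count_J G lam.
have HY := rankY; rewrite mxrank_ker mxrank_tr HJ in HY.
have Hr1 := rank_leq_row Amat.
have Hr2 := rank_leq_col Amat.
have HV : (#|Vl G lam| <= nV G)%N by have := max_card (mem (Vl G lam)); rewrite card_ord.
rewrite mxrank_ker /beta1.
move: HY Hr1 Hr2 HV H1 H2.
set a := #|El G lam|. set b := #|Vl G lam|. set r := \rank Amat.
move=> *; lia.
Qed.

Section XP.
Local Open Scope R_scope.
Lemma xpos e : exists x, edge_int G e x /\ sin (om * x) <> 0.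
Proof.
have Hl := len_pos e; have Ho := om_pos; have HPI := PI_RGT_0.
set m := Rmin (len G e) (PI / om).
have Hm1 : 0 < m by apply: Rmin_glb_lt => //; apply: Rdiv_lt_0_compat.
have Hm2 : m <= len G e by apply: Rmin_l.
have Hm3 : m <= PI / om by apply: Rmin_r.
exists (m / 2); split; first by rewrite /edge_int; split; lra.
apply: Rgt_not_eq; apply: sin_gt_0.
- apply: Rmult_lt_0_compat => //; lra.
- have : om * (m / 2) <= om * (PI / om / 2) by apply: Rmult_le_compat_l; lra.
  have -> : om * (PI / om / 2) = PI / 2 by field; lra.
  lra.
Qed.
End XP.

Lemma main_thm :
  (beta0odd G lam <= beta1 G lam)%N /\
  has_dim G (Rspace G lam) (beta1 G lam - beta0odd G lam) /\
  (is_resonance G lam <-> (beta1 G lam - beta0odd G lam)%N <> 0%N).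
Proof.
have [Hle Hd] := dims.
have HD : has_dim G (Rspace G lam) (beta1 G lam - beta0odd G lam).
{ rewrite Hd.
  pose Bm := row_base (kermx Amat).
  have HB : (Bm <= kermx Amat)%MS by rewrite eq_row_base.
  exists (fun i e x => arow (row i Bm) e * sin (om * x)).
  split; [|split].
  - move=> i; apply: coef_Rspace; first exact: arow_nEl.
    apply: ker_rel; apply/sub_kermxP; exact: submx_trans (row_sub i Bm) HB.
  - move=> c Hc.
    pose cr := \row_i c i.
    have H0 : cr *m Bm = 0.
    { apply/rowP => j; rewrite !mxE.
      under eq_bigr => i _ do rewrite mxE.
      have [x [Hx Hs]] := xpos (ev j).
      have := Hc (ev j) x Hx; rewrite bigRE.
      rewrite (eq_bigr (fun i => (c i * Bm i j) * sin (om * x))); last first.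
      { move=> i _; rewrite arow_ev mxE; symmetry; exact: Rmult_assoc. }
      rewrite -mulr_suml => /eqP; rewrite mulf_eq0 => /orP [/eqP //|/eqP Hs0].
      by exfalso; apply: Hs. }
    have : cr *m Bm = 0 *m Bm by rewrite H0 mul0mx.
    move/(row_free_inj (row_base_free (kermx Amat))) => Hcr i.
    by have := f_equal (fun M : 'M_(1, _) => M 0 i) Hcr; rewrite !mxE.
  - move=> f Hf; have [a [Hfa Ha Hrel]] := Rspace_coef Hf.
    pose a' := \row_j a (ev j).
    have Ha' : a' *m Amat = 0 by apply/rowP => v; rewrite sumA // Hrel mxE.
    have : (a' <= Bm)%MS by rewrite eq_row_base; apply/sub_kermxP.
    move=> /submxP [D HD].
    exists (fun i => D 0 i) => e x Hx.
    rewrite Hfa // bigRE.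
    transitivity ((\sum_i D 0 i * arow (row i Bm) e) * sin (om * x)); last first.
    { rewrite mulr_suml; apply: eq_bigr => i _; exact: Rmult_assoc. }
    congr (_ * _).
    rewrite -(arow_a e Ha) -/a' HD /arow.
    symmetry; under eq_bigr => i _ do rewrite mulr_sumr.
    rewrite exchange_big /=; apply: eq_bigr => j _; rewrite mxE.
    by apply: eq_bigr => i _; rewrite mxE. }
split => //; split => //.
exact: resonance_dim HD.
Qed.

End Main.

Theorem theorem3p1 (G : mgraph) (lam : R) (hlam : Rlt 0 lam) :
  (beta0odd G lam <= beta1 G lam)%N /\
  has_dim G (Rspace G lam) (beta1 G lam - beta0odd G lam) /\
  (is_resonance G lam <-> (beta1 G lam - beta0odd G lam)%N <> 0%N).
Proof. exact: main_thm. Qed.
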